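(* Let $\Omega>0$, $c_{\max}>0$, and let $x:\mathbb{R}\to\mathbb{R}$ be a $2\Omega$-bandlimited, $c_{\max}$-bounded signal with finite energy. Suppose $x$ is sampled by an AIF-TEM with parameters $\kappa>0$, $\delta>0$, window size $w\ge 1$, margin $\beta>0$ and a successfully operating MAP block, producing firing times $t_0<t_1<\dots<t_N$, biases $b_1,\dots,b_N$ and local maximal amplitudes $c_1,\dots,c_N$. Then the average oversampling $OS_a$ satisfies $$OS_{a}\le \frac{\mathbb{E}[b_n]+\mathbb{E}[c_n]}{\kappa\delta}\,\frac{\pi}{\Omega}\le \frac{\mathbb{E}[b_n]+c_{\max}}{\kappa\delta}\,\frac{\pi}{\Omega}.$$
   Context: A signal $x$ is $2\Omega$-bandlimited if its Fourier transform vanishes outside $[-\Omega,\Omega]$; it is $c_{\max}$-bounded if $|x(t)|\le c_{\max}$ for all $t$; it has finite energy if $\int_{-\infty}^\infty |x(t)|^2dt<\infty$. An AIF-TEM (adaptive integrate-and-fire time encoding machine) with parameters $\kappa,\delta>0$ and window size $w$ produces a strictly increasing sequence of firing times $t_n$ and biases $b_n>0$ such that for each $n$, $\frac1\kappa\int_{t_{n-1}}^{t_n}(x(s)+b_n)\,ds=\delta$. The local maximal amplitude is $c_n=\max_{t_{n-w}\le t\le t_n}|x(t)|$. The MAP block operates successfully (with margin $\beta>0$) if $b_n\ge c_n+\beta$ for all $n$. Write $T_n=t_n-t_{n-1}$. $\mathbb{E}[\cdot]$ denotes the average over the sample indices $n=1,\dots,N$. The average sampling frequency is $f_s=1/\mathbb{E}[T_n]$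 and the average oversampling is $OS_a=f_s\cdot\frac{\pi}{\Omega}$. *)

(* Defs.v *)
From HB Require Import structures.
From mathcomp Require Import all_boot all_order all_algebra.
From mathcomp Require Import all_classical all_reals all_analysis.
Set Implicit Arguments. Unset Strict Implicit. Unset Printing Implicit Defensive.
Import Order.TTheory GRing.Theory Num.Theory.
Import numFieldNormedType.Exports.
Local Open Scope classical_set_scope.
Local Open Scope ring_scope.

Section Defs.
Variable R : realType.
Local Notation mu := (@lebesgue_measure R).

Definition finite_energy (x : R -> R) : Prop :=
  measurable_fun setT x /\ (\int[mu]_(t in setT) ((x t) ^+ 2)%:E < +oo)%E.

Definition bounded_by (x : R -> R) (cmax : R) : Prop := forall t, `|x t| <= cmax.

(* 2*Omega-bandlimited: the Fourier transform X = Xr + i Xi of x vanishes outside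
   [-Omega, Omega], i.e. x is the inverse Fourier transform of a spectrum X supported
   in [-Omega, Omega]:  x(t) = 1/(2 pi) \int_{-Omega}^{Omega} X(w) e^{i w t} dw
   (real part = x(t), imaginary part = 0 since x is real-valued). *)
Definition bandlimited (Omega : R) (x : R -> R) : Prop :=
  exists Xr Xi : R -> R,
    mu.-integrable `[- Omega, Omega] (fun w => (Xr w)%:E) /\
    mu.-integrable `[- Omega, Omega] (fun w => (Xi w)%:E) /\
    forall t,
      x t = (2 * pi)^-1 * Rintegral mu `[- Omega, Omega]
                 (fun w => Xr w * cos (w * t) - Xi w * sin (w * t)) /\
      0 = Rintegral mu `[- Omega, Omega]
                 (fun w => Xr w * sin (w * t) + Xi w * cos (w * t)).

(* local maximal amplitude c_n = max_{t_{n-w} <= s <= t_n} |x(s)|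
   (n - w is truncated at 0, i.e. t_{n-w} := t_0 when n < w) *)
Definition local_max_amp (x : R -> R) (t : nat -> R) (w n : nat) : R :=
  sup [set `|x s| | s in `[t (n - w)%N, t n]].

Definition avg (N : nat) (f : nat -> R) : R :=
  N%:R^-1 * \sum_(1 <= n < N.+1) f n.

Definition aif_tem (x : R -> R) (kappa delta : R) (N : nat) (t b : nat -> R) : Prop :=
  (forall n, (n < N)%N -> t n < t n.+1) /\
  (forall n, (1 <= n <= N)%N -> 0 < b n) /\
  (forall n, (1 <= n <= N)%N ->
     kappa^-1 * Rintegral mu `[t n.-1, t n] (fun s => x s + b n) = delta /\
     mu.-integrable `[t n.-1, t n] (fun s => (x s + b n)%:E)).

Definition map_success (x : R -> R) (w N : nat) (t b : nat -> R) (beta : R) : Prop :=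
  forall n, (1 <= n <= N)%N -> local_max_amp x t w n + beta <= b n.

(* T_n = t_n - t_{n-1}; f_s = 1/E[T_n]; OS_a = f_s * pi/Omega *)
Definition avg_oversampling (Omega : R) (N : nat) (t : nat -> R) : R :=
  (avg N (fun n => t n - t n.-1))^-1 * (pi / Omega).

End Defs.

(* Main.v *)
Require Import Defs.
From HB Require Import structures.
From mathcomp Require Import all_boot all_order all_algebra.
From mathcomp Require Import all_classical all_reals all_analysis.
From mathcomp Require Import ring lra zify.
Import Order.TTheory GRing.Theory Num.Theory.
Import numFieldNormedType.Exports.
Local Open Scope classical_set_scope.
Local Open Scope ring_scope.

Lemma int_le (R : realType) (a c : R) (f : R -> R) (M : R) : a <= c ->
  (@lebesgue_measure R).-integrable `[a, c] (fun s => (f s)%:E) ->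
  (forall s, a <= s <= c -> f s <= M) ->
  Rintegral (@lebesgue_measure R) `[a, c] f <= M * (c - a).
Proof.
move=> ac fi fM.
have -> : M * (c - a) = Rintegral (@lebesgue_measure R) `[a, c] (fun=> M).
  rewrite Rintegral_cst //= lebesgue_measure_itv /=.
  rewrite lte_fin; case: ltP => [//|ca].
  have -> : a = c by apply/eqP; rewrite eq_le ac ca.
  by rewrite subrr mulr0.

apply: le_Rintegral => //.
  apply: continuous_compact_integrable; first exact: segment_compact.
  by apply: continuous_subspaceT => ?; apply: cvg_cst.

Qed.
Lemma pair_le (R : realType) (Ti Tj ai aj K : R) : 0 < Ti -> 0 < Tj -> 0 <= K ->
  K <= ai * Ti -> K <= aj * Tj -> 2 * K <= Ti * aj + Tj * ai.
Proof.
move=> hi hj hK h1 h2.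
have hij : 0 < Ti * Tj by apply: mulr_gt0.
rewrite -(ler_pM2l hij).
have e : Ti * Tj * (Ti * aj + Tj * ai) = Ti ^+ 2 * (aj * Tj) + Tj ^+ 2 * (ai * Ti).
  by rewrite !expr2; ring.
rewrite e.
have l1 : Ti ^+ 2 * K <= Ti ^+ 2 * (aj * Tj) by apply: ler_wpM2l; [apply: sqr_ge0|].
have l2 : Tj ^+ 2 * K <= Tj ^+ 2 * (ai * Ti) by apply: ler_wpM2l; [apply: sqr_ge0|].
have l3 : Ti * Tj * (2 * K) <= Ti ^+ 2 * K + Tj ^+ 2 * K.
  have : 0 <= K * (Ti - Tj) ^+ 2 by apply: mulr_ge0 => //; apply: sqr_ge0.
  by rewrite !expr2; lra.
lra.
Qed.

Lemma sum_key (R : realType) (N : nat) (T a : nat -> R) (K : R) : 0 <= K ->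
  (forall n, (1 <= n < N.+1)%N -> 0 < T n) ->
  (forall n, (1 <= n < N.+1)%N -> K <= a n * T n) ->
  (N%:R ^+ 2) * K <= (\sum_(1 <= i < N.+1) T i) * (\sum_(1 <= j < N.+1) a j).
Proof.
move=> hK hT ha.
set S := (\sum_(1 <= i < N.+1) T i) * _.
have e1 : S = \sum_(1 <= i < N.+1) \sum_(1 <= j < N.+1) T i * a j.
  by rewrite /S mulr_suml; apply: eq_bigr => i _; rewrite mulr_sumr.
have e2 : S = \sum_(1 <= i < N.+1) \sum_(1 <= j < N.+1) T j * a i.
  by rewrite e1 exchange_big.
have e3 : 2 * S = \sum_(1 <= i < N.+1) \sum_(1 <= j < N.+1) (T i * a j + T j * a i).
  rewrite mulr2n mulrDl mul1r {1}e1 e2 -big_split /=.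
  by apply: eq_bigr => i _; rewrite -big_split.
have e4 : \sum_(1 <= i < N.+1) \sum_(1 <= j < N.+1) (2 * K) = 2 * (N%:R ^+ 2 * K).
  rewrite sumr_const_nat sumr_const_nat subn1 /= -mulr_natr -mulr_natr.
  by rewrite expr2; ring.
have : \sum_(1 <= i < N.+1) \sum_(1 <= j < N.+1) (2 * K) <= 2 * S.
  rewrite e3; apply: ler_sum_nat => i hi; apply: ler_sum_nat => j hj.
  by apply: pair_le; auto.
rewrite e4; lra.
Qed.

Theorem theorem1 (R : realType) (Omega cmax kappa delta beta : R) (w N : nat)
  (x : R -> R) (t b : nat -> R) :
  0 < Omega -> 0 < cmax ->
  bandlimited Omega x -> bounded_by x cmax -> finite_energy x ->
  0 < kappa -> 0 < delta -> (1 <= w)%N -> 0 < beta -> (1 <= N)%N ->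
  aif_tem x kappa delta N t b ->
  map_success x w N t b beta ->
  let c := local_max_amp x t w in
  avg_oversampling Omega N t
    <= (avg N b + avg N c) / (kappa * delta) * (pi / Omega) /\
  (avg N b + avg N c) / (kappa * delta) * (pi / Omega)
    <= (avg N b + cmax) / (kappa * delta) * (pi / Omega).
Proof.
move=> hO hc _ hx _ hk hd hw _ hN [tinc [bpos hint]] _ c.
have tmono : forall i j, (i <= j)%N -> (j <= N)%N -> t i <= t j.
  move=> i j; elim: j => [|j IH].
    by rewrite leqn0 => /eqP ->.
  rewrite leq_eqVlt => /orP [/eqP -> //|hij] hj.
  apply: le_trans (IH hij (ltnW hj)) _.
  exact/ltW/tinc.
have hset : forall n, (n <= N)%N -> has_ubound [set `|x s| | s in `[t (n - w)%N, t n]].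
  by move=> n _; exists cmax => _ [s _ <-].
have cub : forall n s, (1 <= n <= N)%N -> t n.-1 <= s <= t n -> `|x s| <= c n.
  move=> n s /andP [h1 h2] /andP [s1 s2].
  apply: (ub_le_sup (hset n h2)); exists s => //.
  rewrite /= in_itv /= s2 andbT; apply: le_trans s1.
  by apply: tmono => //; [lia|lia].
have cle : forall n, (1 <= n <= N)%N -> c n <= cmax.
  move=> n /andP [h1 h2]; apply: ge_sup.
    exists `|x (t n)|; exists (t n) => //.
    by rewrite /= in_itv /= lexx andbT; apply: tmono => //; lia.
  by move=> _ [s _ <-].
set K := kappa * delta.
have hK : 0 < K by apply: mulr_gt0.
have hp : 0 <= pi / Omega by apply: divr_ge0; [apply: ltW; apply: pi_gt0| apply: ltW].
have avgle : avg N c <= cmax.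
  rewrite /avg ler_pdivrMl; last by rewrite ltr0n; lia.
  apply: le_trans (ler_sum_nat (G := fun=> cmax) _) _.
    by move=> i hi; apply: cle; lia.
  by rewrite sumr_const_nat subn1 /= mulr_natl.
split; last first.
  apply: ler_wpM2r => //; apply: ler_wpM2r; first by rewrite invr_ge0 ltW.
  by rewrite lerD2l.
rewrite /avg_oversampling; apply: ler_wpM2r => //.
have hT : forall n, (1 <= n < N.+1)%N -> 0 < t n - t n.-1.
  move=> n hn; rewrite subr_gt0.
  have -> : n = n.-1.+1 by lia.
  rewrite -pred_Sn; apply: tinc; lia.
have ha : forall n, (1 <= n < N.+1)%N -> K <= (b n + c n) * (t n - t n.-1).
  move=> n hn.
  have hn' : (1 <= n <= N)%N by lia.
  have [hi1 hi2] := hint n hn'.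
  have -> : K = Rintegral (@lebesgue_measure R) `[t n.-1, t n] (fun s => x s + b n).
    by rewrite /K -hi1 mulrA mulfV ?mul1r // gt_eqF.
  apply: int_le => //.
    by apply: ltW; rewrite -subr_gt0; apply: hT.
  move=> s hs; rewrite /= [b n + _]addrC lerD2r.
  by apply: le_trans (cub n s hn' hs); apply: ler_norm.
have key := @sum_key R N _ _ K (ltW hK) hT ha.
have hsum : avg N b + avg N c = avg N (fun n => b n + c n).
  by rewrite /avg -mulrDr big_split.
rewrite hsum.
have hNp : (0 : R) < N%:R by rewrite ltr0n; lia.
have hST : 0 < \sum_(1 <= i < N.+1) (t i - t i.-1).
  rewrite big_ltn; last by lia.
  apply: ltr_pwDl; first by apply: hT; lia.
  rewrite big_nat_cond; apply: sumr_ge0 => i /andP [hi _].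
  by apply/ltW/hT; lia.
rewrite /avg.
set sT := \sum_(1 <= i < N.+1) (t i - t i.-1).
set sa := \sum_(1 <= i < N.+1) (b i + c i).
have hA : 0 < N%:R^-1 * sT by apply: mulr_gt0 => //; rewrite invr_gt0.
rewrite ler_pdivlMr // ler_pdivrMl //.
have e : N%:R^-1 * sT * (N%:R^-1 * sa) = (N%:R ^+ 2)^-1 * (sT * sa).
  by field; rewrite gt_eqF.
have hN2 : (0 : R) < N%:R ^+ 2 by apply: exprn_gt0.
rewrite e -(ler_pM2l hN2).
have -> : N%:R ^+ 2 * ((N%:R ^+ 2)^-1 * (sT * sa)) = sT * sa.
  by field; rewrite gt_eqF.
exact: key.
Qed.
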